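(* Let $|\Psi\rangle$ be a pure state and $\sigma$ a density operator on a finite-dimensional Hilbert space, $H$ Hermitian, and $0<\epsilon$ with $\||\Psi\rangle\langle\Psi|-\sigma\|_1\le\epsilon$. Then the eigenvector $|\Phi\rangle$ of $\sigma$ with the largest eigenvalue satisfies $|\langle\Psi|\Phi\rangle|^2\ge1-\epsilon$ and $$P_H(\sigma)\ge V_H(\Phi)\,(2\epsilon^{-1}-3).$$
   Context: $V_H(\Phi)=\langle\Phi|H^2|\Phi\rangle-\langle\Phi|H|\Phi\rangle^2$. Purity of coherence: $P_H(\sigma)=\mathrm{Tr}(H\sigma^2H\sigma^{-1})-\mathrm{Tr}(\sigma H^2)$ ($\sigma^{-1}$ inverse on the support) if $\mathrm{supp}(H\sigma H)\subseteq\mathrm{supp}(\sigma)$, else $\infty$. *)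

(* Defs.v *)
(* Complex scalars: an arbitrary numClosedFieldType C
   (algebraically closed field with conjugation, e.g. algC; the statement is
   first-order over C so this is the standard generic rendering). *)
From HB Require Import structures.
From mathcomp Require Import all_boot all_order all_algebra.
Set Implicit Arguments. Unset Strict Implicit. Unset Printing Implicit Defensive.
Import Order.TTheory GRing.Theory Num.Theory Num.Def.
Local Open Scope ring_scope.

Section Quantum.
Variable C : numClosedFieldType.

Definition adj m n (M : 'M[C]_(m, n)) : 'M[C]_(n, m) := map_mx conjC (M^T).

Definition herm n (A : 'M[C]_n) : Prop := A \is hermsymmx.

Definition psd n (A : 'M[C]_n) : Prop :=
  herm A /\ forall v : 'cV[C]_n, 0 <= (adj v *m A *m v) 0 0.

Definition density n (sigma : 'M[C]_n) : Prop := psd sigma /\ \tr sigma = 1.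

Definition unit_vec n (psi : 'cV[C]_n) : Prop := (adj psi *m psi) 0 0 = 1.

Definition proj n (psi : 'cV[C]_n) : 'M[C]_n := psi *m adj psi.

Definition braket n (u v : 'cV[C]_n) : C := (adj u *m v) 0 0.

(* trace norm of a normal (in particular Hermitian) matrix: sum of the
   absolute values of its eigenvalues (spectral decomposition
   A = P^dagger diag(d) P, P unitary). *)
Definition trnorm n (A : 'M[C]_n) : C :=
  \sum_(i < n) `|spectral_diag A 0 i|.

(* Inverse on the support of a Hermitian sigma = P^dagger diag(d) P:
   P^dagger diag(d_i^{-1} if d_i <> 0, 0 otherwise) P (0^-1 = 0 in MathComp). *)
Definition supp_inv n (sigma : 'M[C]_n) : 'M[C]_n :=
  invmx (spectralmx sigma) *m diag_mx (map_mx GRing.inv (spectral_diag sigma))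
    *m spectralmx sigma.

(* supp(A) \subseteq supp(B): inclusion of column spaces (ranges) *)
Definition supp_sub n (A B : 'M[C]_n) : bool := ((A^T) <= (B^T))%MS.

Definition variance n (H : 'M[C]_n) (phi : 'cV[C]_n) : C :=
  braket phi (H *m H *m phi) - (braket phi (H *m phi)) ^+ 2.

(* purity of coherence P_H(sigma); None encodes +infinity *)
Definition purity_coh n (H sigma : 'M[C]_n) : option C :=
  if supp_sub (H *m sigma *m H) sigma then
    Some (\tr (H *m (sigma *m sigma) *m H *m supp_inv sigma)
          - \tr (sigma *m (H *m H)))
  else None.

Definition ext_ge (x : option C) (r : C) : Prop :=
  if x is Some p then r <= p else True.

End Quantum.

(* Main.v *)
Require Import Defs.
From HB Require Import structures.
From mathcomp Require Import all_boot all_order all_algebra.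
From mathcomp Require Import ring lra.
Import Order.TTheory GRing.Theory Num.Theory.
Set Implicit Arguments. Unset Strict Implicit.
Local Open Scope ring_scope.

Lemma adj_mul {C : numClosedFieldType} m n p (A : 'M[C]_(m,n)) (B : 'M[C]_(n,p)) :
  adj (A *m B) = adj B *m adj A.
Proof. by rewrite /adj trmx_mul map_mxM. Qed.

Lemma adjK {C : numClosedFieldType} m n (A : 'M[C]_(m,n)) : adj (adj A) = A.
Proof. exact: trmxCK. Qed.

Lemma quad_diag {C : numClosedFieldType} n (y : 'cV[C]_n) (e : 'rV[C]_n) :
  (adj y *m diag_mx e *m y) 0 0 = \sum_k e 0 k * ((y k 0)^* * y k 0).
Proof.
rewrite mxE; apply: eq_bigr => k _; rewrite mul_mx_diag !mxE.
by rewrite mulrCA mulrA.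
Qed.

Lemma norm_sq {C : numClosedFieldType} n (y : 'cV[C]_n) :
  (adj y *m y) 0 0 = \sum_k (y k 0)^* * y k 0.
Proof. by rewrite mxE; apply: eq_bigr => k _; rewrite !mxE. Qed.

Lemma spec_UUt {C : numClosedFieldType} n (A : 'M[C]_n) :
  spectralmx A *m adj (spectralmx A) = 1%:M.
Proof. exact/unitarymxP/spectral_unitarymx. Qed.

Lemma spec_UtU {C : numClosedFieldType} n (A : 'M[C]_n) :
  adj (spectralmx A) *m spectralmx A = 1%:M.
Proof.
have := spectral_unitarymx A => hU.
by rewrite /adj -invmx_unitary // mulVmx // spectral_unit.
Qed.

Lemma spec_dec {C : numClosedFieldType} n (A : 'M[C]_n) : herm A ->
  A = adj (spectralmx A) *m diag_mx (spectral_diag A) *m spectralmx A.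
Proof.
move=> hA; have /hermitian_normalmx/orthomx_spectralP E := hA.
by rewrite {1}E invmx_unitary // spectral_unitarymx.
Qed.

Lemma herm_adj {C : numClosedFieldType} n (A : 'M[C]_n) : herm A -> adj A = A.
Proof.
by move=> /is_hermitianmxP hA; rewrite {2}hA expr0 scale1r.
Qed.

Lemma adj_herm {C : numClosedFieldType} n (A : 'M[C]_n) : adj A = A -> herm A.
Proof.
by move=> hA; apply/is_hermitianmxP; rewrite expr0 scale1r.
Qed.

Lemma herm_entry {C : numClosedFieldType} n (A : 'M[C]_n) i j :
  herm A -> (A i j)^* = A j i.
Proof.
move=> /herm_adj hA; by rewrite -{2}hA !mxE.
Qed.

Lemma term_lb {C : numClosedFieldType} (e p : C) : e \is Num.real ->
  0 <= p -> p <= 1 -> (e - `|e|) / 2 <= e * p.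
Proof.
move=> he p0 p1; have [e0|e0] := real_ge0P he.
  by rewrite subrr mul0r mulr_ge0.
have -> : (e - - e) / 2 = e by field; rewrite ?pnatr_eq0.
rewrite -subr_ge0 (_ : e * p - e = - e * (1 - p)); last by ring.
by rewrite mulr_ge0 // ?oppr_ge0 ?subr_ge0 // ltW.
Qed.

Lemma sum_p_le1 {C : numClosedFieldType} n (p : 'I_n -> C) k :
  (forall j, 0 <= p j) -> \sum_j p j = 1 -> p k <= 1.
Proof.
move=> p0 ps; rewrite -ps (bigD1 k) //= lerDl sumr_ge0 //.
Qed.

Lemma spec_real {C : numClosedFieldType} n (A : 'M[C]_n) k :
  herm A -> spectral_diag A 0 k \is Num.real.
Proof.
by move=> /hermitian_spectral_diag_real /mxOverP; apply.
Qed.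

Lemma tr_conj {C : numClosedFieldType} n (U M : 'M[C]_n) :
  U *m adj U = 1%:M -> \tr (adj U *m M *m U) = \tr M.
Proof.
by move=> hU; rewrite mxtrace_mulC mulmxA hU mul1mx.
Qed.

Lemma quad_conj {C : numClosedFieldType} n (U : 'M[C]_n) (e : 'rV[C]_n) (x : 'cV[C]_n) :
  (adj x *m (adj U *m diag_mx e *m U) *m x) 0 0 =
  \sum_k e 0 k * (((U *m x) k 0)^* * (U *m x) k 0).
Proof.
rewrite -quad_diag adj_mul !mulmxA; done.
Qed.

Lemma trnorm_lb {C : numClosedFieldType} n (A : 'M[C]_n) (x : 'cV[C]_n) :
  herm A -> \tr A = 0 -> unit_vec x -> - (trnorm A / 2) <= (adj x *m A *m x) 0 0.
Proof.
move=> hA trA hx.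
set W := spectralmx A; set e := spectral_diag A.
have dec := spec_dec hA; rewrite -/W -/e in dec.
have sume : \sum_k e 0 k = 0.
  have <- : \tr A = \sum_k e 0 k.
    by rewrite {1}dec tr_conj ?spec_UUt // mxtrace_diag.
  exact: trA.
set y := W *m x.
have p0 : forall k, 0 <= (y k 0)^* * y k 0.
  by move=> k; rewrite mulrC mul_conjC_ge0.
have ps : \sum_k (y k 0)^* * y k 0 = 1.
  rewrite -norm_sq /y adj_mul mulmxA -(mulmxA (adj x)) spec_UtU mulmx1.
  exact: hx.
rewrite [in X in _ <= X]dec quad_conj -/y.
apply: (@le_trans _ _ (\sum_k (e 0 k - `|e 0 k|) / 2)); last first.
  apply: ler_sum => k _; apply: term_lb; first exact: spec_real.
    exact: p0.
  exact: sum_p_le1 p0 ps.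
rewrite -mulr_suml sumrB sume sub0r mulNr; done.
Qed.

Lemma term_ub {C : numClosedFieldType} (e p : C) : e \is Num.real ->
  0 <= p -> p <= 1 -> e * p <= (e + `|e|) / 2.
Proof.
move=> he p0 p1; have [e0|e0] := real_ge0P he.
  have -> : (e + e) / 2 = e by field; rewrite ?pnatr_eq0.
  rewrite -subr_ge0 (_ : e - e * p = e * (1 - p)); last by ring.
  by rewrite mulr_ge0 // subr_ge0.
have -> : (e + - e) / 2 = 0 by rewrite subrr mul0r.
by rewrite mulr_le0_ge0 // ltW.
Qed.

Lemma trnorm_ub {C : numClosedFieldType} n (A : 'M[C]_n) (x : 'cV[C]_n) :
  herm A -> \tr A = 0 -> unit_vec x -> (adj x *m A *m x) 0 0 <= trnorm A / 2.
Proof.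
move=> hA trA hx.
set W := spectralmx A; set e := spectral_diag A.
have dec := spec_dec hA; rewrite -/W -/e in dec.
have sume : \sum_k e 0 k = 0.
  have <- : \tr A = \sum_k e 0 k.
    by rewrite {1}dec tr_conj ?spec_UUt // mxtrace_diag.
  exact: trA.
set y := W *m x.
have p0 : forall k, 0 <= (y k 0)^* * y k 0.
  by move=> k; rewrite mulrC mul_conjC_ge0.
have ps : \sum_k (y k 0)^* * y k 0 = 1.
  rewrite -norm_sq /y adj_mul mulmxA -(mulmxA (adj x)) spec_UtU mulmx1.
  exact: hx.
rewrite [in X in X <= _]dec quad_conj -/y.
apply: (@le_trans _ _ (\sum_k (e 0 k + `|e 0 k|) / 2)).
  apply: ler_sum => k _; apply: term_ub; first exact: spec_real.
    exact: p0.
  exact: sum_p_le1 p0 ps.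
by rewrite -mulr_suml big_split /= sume add0r.
Qed.

Lemma key_ineq {C : numFieldType} (a x e : C) :
  0 < x -> x <= 1 - a -> 1 - e / 2 <= a -> 0 < e -> 3 * e < 2 ->
  2 / e - 3 <= x ^+ 2 / a - x + a ^+ 2 / x - a.
Proof.
move=> x0 xu ae e0 e3.
set u := 1 - a.
have ha : a = 1 - u by rewrite /u; ring.
have i2 : 0 <= (2 : C)^-1 by rewrite invr_ge0 ler0n.
have u0 : 0 < u by apply: lt_le_trans xu.
have ue : 0 <= e - 2 * u.
  have -> : e - 2 * u = 2 * (a - (1 - e / 2)) by rewrite /u; field.
  by rewrite mulr_ge0 ?ler0n // subr_ge0.
have e3' : 0 <= 2 - 3 * e by rewrite subr_ge0 ltW.
have u3 : 0 <= 1 - 3 * u.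
  have -> : 1 - 3 * u = (2 - 3 * e) / 2 + 3 * (e - 2 * u) / 2 by field.
  by rewrite addr_ge0 // mulr_ge0 // mulr_ge0 // ler0n.
have ux : 0 <= u - x by rewrite subr_ge0.
have au : 0 <= a - u.
  have -> : a - u = (1 - 3 * u) + u by rewrite /u; ring.
  by rewrite addr_ge0 // ltW.
have a0 : 0 < a.
  have -> : a = (a - u) + u by ring.
  by rewrite ltr_wpDl.
have ax : 0 <= a - x.
  have -> : a - x = (a - u) + (u - x) by ring.
  exact: addr_ge0.
have apu : 0 <= a + u by rewrite /u addrC subrK ler01.
set Q := u * (a - u) * (a + u) + u * x * (a - x) + u * u * (a - x) + a * (1 - 3 * u).
have Q0 : 0 <= Q.
  rewrite /Q !addr_ge0 // ?mulr_ge0 // ?ltW //.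
have x0' : x != 0 by rewrite gt_eqF.
have a0' : a != 0 by rewrite gt_eqF.
have u0' : u != 0 by rewrite gt_eqF.
have e0' : e != 0 by rewrite gt_eqF.
rewrite -subr_ge0.
have -> : x ^+ 2 / a - x + a ^+ 2 / x - a - (2 / e - 3) =
   ((u - x) * Q + u ^+ 3) / (a * x * u) + (e - 2 * u) / (u * e).
  rewrite /Q ha; field.
  by rewrite -ha a0' x0' u0' e0'.
rewrite addr_ge0 // divr_ge0 // ?addr_ge0 ?mulr_ge0 ?exprn_ge0 // ?ltW //.
Qed.

Section Abs.
Variables (C : numFieldType) (n : nat) (d : 'I_n -> C) (w : 'I_n -> 'I_n -> C).
Hypothesis dge0 : forall i, 0 <= d i.
Hypothesis wge0 : forall i j, 0 <= w i j.
Hypothesis wsym : forall i j, w i j = w j i.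
Hypothesis supp : forall i j, d i = 0 -> d j * w i j = 0.

Definition tterm i j := w i j * (d j ^+ 2 / d i - d j).
Definition ss i j := tterm i j + tterm j i.
Definition TT := \sum_i \sum_j tterm i j.

Lemma ss_sym i j : ss i j = ss j i.
Proof. by rewrite /ss addrC. Qed.

Lemma tt0 i j : d i = 0 -> tterm i j = 0.
Proof.
move=> di; by rewrite /tterm di invr0 mulr0 sub0r mulrN mulrC (supp _ di)  oppr0.
Qed.

Lemma tt0' i j : d i = 0 -> tterm j i = 0.
Proof.
move=> di; by rewrite /tterm di expr0n /= mul0r subrr mulr0 //.
Qed.

Lemma ss_pos i j : 0 < d i -> 0 < d j ->
  ss i j = w i j * (d j ^+ 2 / d i - d j + d i ^+ 2 / d j - d i).
Proof.
move=> hi hj; rewrite /ss /tterm (wsym j i); ring.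
Qed.

Lemma ss_ge0 i j : 0 <= ss i j.
Proof.
have [di|di] := eqVneq (d i) 0.
  by rewrite /ss (tt0 _ di) (tt0' _ di) addr0.
have [dj|dj] := eqVneq (d j) 0.
  by rewrite /ss (tt0' _ dj) (tt0 _ dj) addr0.
have hi : 0 < d i by rewrite lt_def di dge0.
have hj : 0 < d j by rewrite lt_def dj dge0.
rewrite ss_pos // mulr_ge0 //.
have -> : d j ^+ 2 / d i - d j + d i ^+ 2 / d j - d i =
   (d i - d j) ^+ 2 * (d i + d j) / (d i * d j).
  by field; rewrite di dj.
have rij : d i - d j \is Num.real by rewrite realB ?ger0_real ?dge0.
apply: divr_ge0; last by apply: mulr_ge0.
apply: mulr_ge0; last exact: addr_ge0.
exact: real_exprn_even_ge0.
Qed.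

Lemma TT2 : 2 * TT = \sum_i \sum_j ss i j.
Proof.
rewrite /ss mulr_natl mulr2n /TT; apply: esym.
under eq_bigr do rewrite big_split /=.
rewrite big_split /=; congr (_ + _).
by rewrite exchange_big.
Qed.

Lemma TT_ge0 : 0 <= TT.
Proof.
have : 0 <= 2 * TT by rewrite TT2 sumr_ge0 // => i _; rewrite sumr_ge0 // => j _; apply: ss_ge0.
by rewrite pmulr_rge0 // ltr0n.
Qed.

Lemma TT_lb k (K : C) : 0 < d k ->
  (forall j, j != k -> 0 < d j -> K <= d j ^+ 2 / d k - d j + d k ^+ 2 / d j - d k) ->
  (\sum_(j | j != k) w k j) * K <= TT.
Proof.
move=> dk hK.
have step1 : \sum_(j | j != k) ss k j <= TT.
  set S := \sum_(j | j != k) ss k j.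
  have h2 : 2 * S <= 2 * TT.
    rewrite TT2 [in X in _ <= X](bigD1 k) //=.
    rewrite [X in _ <= X + _](bigD1 k) //= -/S.
    set R := \sum_(i | i != k) _.
    have hR : S <= R.
      apply: ler_sum => i hi.
      by rewrite ss_sym [X in _ <= X](bigD1 k) //= lerDl sumr_ge0 // => j _; exact: ss_ge0.
    rewrite -subr_ge0 (_ : ss k k + S + R - 2 * S = ss k k + (R - S)); last by ring.
    by rewrite addr_ge0 ?ss_ge0 // subr_ge0.
  by rewrite ler_pM2l ?ltr0n in h2.
apply: le_trans step1.
rewrite mulr_suml; apply: ler_sum => j hj.
have [dj|dj] := eqVneq (d j) 0.
  have : d k * w j k = 0 by apply: supp.
  move/eqP; rewrite mulf_eq0 (gt_eqF dk) /= => /eqP wjk.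
  by rewrite wsym wjk mul0r ss_ge0.
have hj' : 0 < d j by rewrite lt_def dj dge0.
rewrite ss_pos // ler_wpM2l //.
exact: hK.
Qed.
End Abs.

Section Cj.
Variables (C : numClosedFieldType) (n : nat) (U : 'M[C]_n).
Hypothesis UUt : U *m adj U = 1%:M.
Hypothesis UtU : adj U *m U = 1%:M.

Definition cj (M : 'M[C]_n) := U *m M *m adj U.

Lemma cjM A B : cj (A *m B) = cj A *m cj B.
Proof.
by rewrite /cj !mulmxA -[U *m A *m adj U *m U]mulmxA UtU mulmx1.
Qed.

Lemma cj_dec (D : 'M[C]_n) : cj (adj U *m D *m U) = D.
Proof.
by rewrite /cj !mulmxA UUt mul1mx -mulmxA UUt mulmx1.
Qed.

Lemma tr_cj A : \tr (cj A) = \tr A.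
Proof. by rewrite /cj mxtrace_mulC mulmxA UtU mul1mx. Qed.

Lemma quad_cj (x : 'cV[C]_n) (M : 'M[C]_n) :
  (adj x *m M *m x) = adj (U *m x) *m cj M *m (U *m x).
Proof.
rewrite /cj adj_mul !mulmxA -[adj x *m adj U *m U]mulmxA UtU mulmx1.
by rewrite -[adj x *m M *m adj U *m U]mulmxA UtU mulmx1.
Qed.

Lemma adj_cj A : adj (cj A) = cj (adj A).
Proof. by rewrite /cj !adj_mul adjK mulmxA. Qed.
End Cj.

Lemma tr_entry {C : numClosedFieldType} n (M : 'M[C]_n) : \tr M = \sum_i M i i.
Proof. by []. Qed.

Lemma mul_entry {C : numClosedFieldType} n m p (A : 'M[C]_(n,m)) (B : 'M[C]_(m,p)) i j :
  (A *m B) i j = \sum_k A i k * B k j.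
Proof. by rewrite mxE. Qed.

Lemma delta_sum {C : numClosedFieldType} n (f : 'I_n -> C) k :
  \sum_j f j * (((delta_mx k 0 : 'cV[C]_n) j 0)^* * (delta_mx k 0 : 'cV[C]_n) j 0) = f k.
Proof.
rewrite (bigD1 k) //= big1 ?addr0.
  by rewrite !mxE !eqxx /= conjC1 !mulr1.
by move=> j hj; rewrite !mxE (negbTE hj) /= mulr0 mulr0.
Qed.

Lemma diag_delta {C : numClosedFieldType} n (d : 'rV[C]_n) k :
  diag_mx d *m delta_mx k 0 = d 0 k *: (delta_mx k 0 : 'cV[C]_n).
Proof.
apply/matrixP => i j; rewrite mul_diag_mx !mxE.
by case: (eqVneq i k) => [->|h] /=; rewrite ?mulr0 ?mulr1.
Qed.

Lemma delta_neq0 {C : numClosedFieldType} n (k : 'I_n) : (delta_mx k 0 : 'cV[C]_n) != 0.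
Proof.
apply/negP => /eqP /matrixP /(_ k 0); rewrite !mxE !eqxx /= => /eqP.
by rewrite oner_eq0.
Qed.

Section Dens.
Variables (C : numClosedFieldType) (n : nat) (sigma : 'M[C]_n).
Hypothesis hsigma : density sigma.
Let U := spectralmx sigma.
Let d := spectral_diag sigma.
Let hs : herm sigma. Proof. by case: hsigma => [[]]. Qed.
Let dec : sigma = adj U *m diag_mx d *m U. Proof. exact: spec_dec. Qed.
Let UUt : U *m adj U = 1%:M. Proof. exact: spec_UUt. Qed.
Let UtU : adj U *m U = 1%:M. Proof. exact: spec_UtU. Qed.

Lemma cj_sigma : cj U sigma = diag_mx d.
Proof. by rewrite {1}dec (cj_dec UUt). Qed.

Lemma quad_sigma (x : 'cV[C]_n) :
  (adj x *m sigma *m x) 0 0 = \sum_k d 0 k * (((U *m x) k 0)^* * (U *m x) k 0).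
Proof. by rewrite (quad_cj UtU) cj_sigma quad_diag. Qed.

Lemma d_ge0 k : 0 <= d 0 k.
Proof.
case: hsigma => [[_ hp] _].
have := hp (adj U *m delta_mx k 0).
by rewrite quad_sigma mulmxA UUt mul1mx delta_sum.
Qed.

Lemma d_sum : \sum_k d 0 k = 1.
Proof.
case: hsigma => _ <-.
by rewrite -(tr_cj UtU) cj_sigma mxtrace_diag.
Qed.

Lemma d_eig k : sigma *m (adj U *m (delta_mx k 0 : 'cV_n)) = d 0 k *: (adj U *m (delta_mx k 0 : 'cV_n)).
Proof.
rewrite {1}dec -!mulmxA (mulmxA U) UUt mul1mx diag_delta.
by rewrite -scalemxAr.
Qed.

Lemma d_vec_neq0 k : adj U *m (delta_mx k 0 : 'cV[C]_n) != 0.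
Proof.
apply/negP => /eqP h; move: (@delta_neq0 C n k).
by rewrite -(mul1mx (delta_mx k 0)) -UUt -mulmxA h mulmx0 eqxx.
Qed.

Lemma d_le_lam (lam : C) :
  (forall (mu : C) (v : 'cV[C]_n), v != 0 -> sigma *m v = mu *: v -> mu <= lam) ->
  forall k, d 0 k <= lam.
Proof. by move=> hmax k; apply: (hmax _ _ (d_vec_neq0 k) (d_eig k)). Qed.

Lemma quad_le (lam : C) (x : 'cV[C]_n) :
  (forall k, d 0 k <= lam) -> unit_vec x -> (adj x *m sigma *m x) 0 0 <= lam.
Proof.
move=> hl hx; rewrite quad_sigma.
have ps : \sum_k ((U *m x) k 0)^* * (U *m x) k 0 = 1.
  by rewrite -norm_sq adj_mul mulmxA -(mulmxA (adj x)) UtU mulmx1.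
rewrite -[X in _ <= X]mulr1 -ps mulr_sumr; apply: ler_sum => k _.
by rewrite ler_wpM2r // mulrC mul_conjC_ge0.
Qed.
End Dens.

Lemma adj_sub {C : numClosedFieldType} m n (A B : 'M[C]_(m,n)) : adj (A - B) = adj A - adj B.
Proof. by apply/matrixP => i j; rewrite !mxE rmorphB. Qed.

Lemma adj_scale {C : numClosedFieldType} m n (c : C) (A : 'M[C]_(m,n)) : adj (c *: A) = c^* *: adj A.
Proof. by apply/matrixP => i j; rewrite !mxE rmorphM. Qed.

Lemma mul11 {C : numClosedFieldType} (X Y : 'M[C]_1) : (X *m Y) 0 0 = X 0 0 * Y 0 0.
Proof. by rewrite mxE big_ord1. Qed.

Lemma adj_entry11 {C : numClosedFieldType} (X : 'M[C]_1) : (adj X) 0 0 = (X 0 0)^*.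
Proof. by rewrite !mxE. Qed.

Lemma sub_entry {C : numClosedFieldType} m n (A B : 'M[C]_(m,n)) i j : (A - B) i j = A i j - B i j.
Proof. by rewrite !mxE. Qed.

Lemma scale_entry {C : numClosedFieldType} m n (c : C) (A : 'M[C]_(m,n)) i j : (c *: A) i j = c * A i j.
Proof. by rewrite !mxE. Qed.

Lemma claim1 {C : numClosedFieldType} n (psi : 'cV[C]_n) (sigma : 'M[C]_n) (eps : C)
  (phi : 'cV[C]_n) (lam : C) :
  unit_vec psi -> density sigma -> trnorm (proj psi - sigma) <= eps ->
  unit_vec phi -> sigma *m phi = lam *: phi ->
  (forall (mu : C) (v : 'cV[C]_n), v != 0 -> sigma *m v = mu *: v -> mu <= lam) ->
  1 - eps / 2 <= lam /\ 1 - eps <= `|braket psi phi| ^+ 2.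
Proof.
move=> hpsi hsigma hdist hphi heig hmax.
have hs : herm sigma by case: hsigma => [[]].
set A := proj psi - sigma.
have hA : herm A.
  by apply: adj_herm; rewrite /A adj_sub /proj adj_mul adjK (herm_adj hs).
have trA : \tr A = 0.
  rewrite /A linearB /= /proj mxtrace_mulC.
  case: hsigma => _ ->.
  by rewrite /mxtrace big_ord1 hpsi subrr.
have i2 : 0 <= (2 : C)^-1 by rewrite invr_ge0 ler0n.
have ht : trnorm A / 2 <= eps / 2 by rewrite ler_wpM2r.
set q := (adj psi *m sigma *m psi) 0 0.
have hq : 1 - q <= eps / 2.
  apply: le_trans ht; apply: le_trans (trnorm_ub hA trA hpsi).
  rewrite /A /proj mulmxBr mulmxBl sub_entry.
  by rewrite !mulmxA -(mulmxA (adj psi *m psi)) mul11 hpsi mul1r.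
have hql : q <= lam.
  exact: (quad_le hsigma (d_le_lam hsigma hmax) hpsi).
set b := braket psi phi.
have hb : - (eps / 2) <= `|b| ^+ 2 - lam.
  have e1 : (adj phi *m A *m phi) 0 0 = `|b| ^+ 2 - lam.
    rewrite /A /proj mulmxBr mulmxBl sub_entry.
    rewrite -(mulmxA (adj phi) sigma) heig -scalemxAr scale_entry hphi mulr1.
    rewrite !mulmxA -(mulmxA (adj phi *m psi)) mul11.
    by rewrite normCKC /b /braket -adj_entry11 adj_mul adjK.
  rewrite -e1; apply: le_trans (trnorm_lb hA trA hphi).
  by rewrite lerN2.
have hlam : 1 - eps / 2 <= lam.
  rewrite -subr_ge0 (_ : lam - (1 - eps / 2) = (eps / 2 - (1 - q)) + (lam - q)); last by ring.
  by rewrite addr_ge0 // subr_ge0.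
split => //.
rewrite -subr_ge0 (_ : `|b| ^+ 2 - (1 - eps) = (`|b| ^+ 2 - lam - - (eps / 2)) + (lam - (1 - eps / 2))); last first.
  by field.
by rewrite addr_ge0 // subr_ge0.
Qed.

Lemma variance_ge0 {C : numClosedFieldType} n (H : 'M[C]_n) (phi : 'cV[C]_n) :
  herm H -> unit_vec phi -> 0 <= variance H phi.
Proof.
move=> hH hphi.
set c := braket phi (H *m phi).
set v := H *m phi - c *: phi.
have h0 : 0 <= (adj v *m v) 0 0.
  by rewrite norm_sq sumr_ge0 // => k _; rewrite mulrC mul_conjC_ge0.
suff -> : variance H phi = (adj v *m v) 0 0 by [].
rewrite /v adj_sub adj_scale adj_mul (herm_adj hH).
rewrite mulmxBl !mulmxBr !sub_entry -!scalemxAl -!scalemxAr !scale_entry.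
rewrite /variance /braket !mulmxA hphi.
have -> : (adj phi *m H *m phi) 0 0 = c by rewrite /c /braket mulmxA.
ring.
Qed.

Section Main.
Variables (C : numClosedFieldType) (n : nat) (sigma H : 'M[C]_n).
Hypothesis hsigma : density sigma.
Hypothesis hH : herm H.
Let U := spectralmx sigma.
Let d := spectral_diag sigma.
Let UUt : U *m adj U = 1%:M. Proof. exact: spec_UUt. Qed.
Let UtU : adj U *m U = 1%:M. Proof. exact: spec_UtU. Qed.

Definition hh := locked (cj U H).
Lemma hhE : hh = cj U H. Proof. by rewrite /hh -lock. Qed.
Definition dd i := d 0 i.
Definition ww i j := hh i j * hh j i.

Lemma hh_entry i j : (hh i j)^* = hh j i.
Proof.
have : adj hh = hh by rewrite hhE (adj_cj U) (herm_adj hH).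
by move=> e; rewrite -{2}e !mxE.
Qed.

Lemma ww_ge0 i j : 0 <= ww i j.
Proof. by rewrite /ww -(hh_entry i j) mul_conjC_ge0. Qed.

Lemma ww_sym i j : ww i j = ww j i.
Proof. by rewrite /ww mulrC. Qed.

Lemma dd_ge0 i : 0 <= dd i.
Proof. exact: d_ge0. Qed.

Lemma supp_fact : supp_sub (H *m sigma *m H) sigma ->
  forall i j, dd i = 0 -> dd j * ww i j = 0.
Proof.
move=> /submxP [X hX] i j di.
have e1 : H *m sigma *m H = sigma *m X^T.
  by rewrite -[LHS]trmxK hX trmx_mul trmxK.
have e2 : cj U (H *m sigma *m H) = diag_mx d *m cj U X^T.
  by rewrite e1 (cjM UtU) (cj_sigma hsigma).
have e3 : cj U (H *m sigma *m H) = hh *m diag_mx d *m hh.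
  by rewrite !(cjM UtU) (cj_sigma hsigma) hhE.
have s0 : \sum_k dd k * ww i k = 0.
  have e4 : hh *m diag_mx d *m hh = diag_mx d *m cj U X^T by rewrite -e3 e2.
  move/matrixP: e4 => /(_ i i).
  rewrite mul_diag_mx [X in _ = X -> _]mxE (_ : d 0 i = 0) // mul0r => e; apply: (etrans _ e); rewrite mxE.
  apply: eq_bigr => k _; rewrite mul_mx_diag mxE /ww /dd; ring.
have := psumr_eq0P (P := predT) (F := fun k => dd k * ww i k) _ s0.
apply => // k _; exact: mulr_ge0 (dd_ge0 k) (ww_ge0 i k).
Qed.

Lemma purity_eq :
  \tr (H *m (sigma *m sigma) *m H *m supp_inv sigma) - \tr (sigma *m (H *m H))
  = TT dd ww.
Proof.
have cs : cj U (supp_inv sigma) = diag_mx (map_mx GRing.inv d).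
  by rewrite /supp_inv invmx_unitary ?spectral_unitarymx // (cj_dec UUt).
rewrite -(tr_cj UtU) -[X in _ - X](tr_cj UtU) (cjM UtU (H *m (sigma *m sigma) *m H)) cs !(cjM UtU) (cj_sigma hsigma) -hhE.
rewrite /TT !tr_entry.
have -> : \sum_i (diag_mx d *m (hh *m hh)) i i = \sum_i \sum_j ww i j * dd j.
  rewrite exchange_big /=; apply: eq_bigr => i _.
  rewrite mul_diag_mx !mxE mulr_sumr; apply: eq_bigr => j _.
  rewrite /ww /dd; ring.
rewrite -sumrB; apply: eq_bigr => i _.
rewrite mulmxA !mul_mx_diag !mxE mulr_suml -sumrB; apply: eq_bigr => j _.
rewrite !mxE /tterm /ww /dd; ring.
Qed.

Lemma quad_single (f : 'cV[C]_n) (M : 'M[C]_n) k :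
  (forall j, j != k -> f j 0 = 0) -> (f k 0)^* * f k 0 = 1 ->
  (adj f *m M *m f) 0 0 = M k k.
Proof.
move=> hz hu.
rewrite mxE (bigD1 k) //= big1 ?addr0; last first.
  by move=> j hj; rewrite hz // mulr0.
rewrite mxE (bigD1 k) //= big1 ?addr0; last first.
  by move=> j hj; rewrite !mxE hz // conjC0 mul0r.
by rewrite !mxE mulrAC hu mul1r.
Qed.

Lemma phi_coords (phi : 'cV[C]_n) (lam : C) :
  unit_vec phi -> sigma *m phi = lam *: phi -> 2^-1 < lam ->
  exists k, dd k = lam /\ variance H phi = \sum_(j | j != k) ww k j.
Proof.
move=> hphi heig hlam.
set f := U *m phi.
have hD : diag_mx d *m f = lam *: f.
  rewrite /f -(cj_sigma hsigma) /cj -!mulmxA (mulmxA (adj U)) UtU mul1mx.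
  by rewrite heig scalemxAr.
have he : forall i, dd i * f i 0 = lam * f i 0.
  move=> i; move/matrixP: hD => /(_ i 0).
  by rewrite mul_diag_mx !mxE.
have hsum : \sum_k (f k 0)^* * f k 0 = 1.
  by rewrite -norm_sq /f adj_mul mulmxA -(mulmxA (adj phi)) UtU mulmx1.
have [k hk] : exists k, f k 0 != 0.
  case: (pickP (fun k => f k 0 != 0)) => [k hk|hn]; first by exists k.
  move: hsum; rewrite big1 => [/eqP|j _]; first by rewrite eq_sym oner_eq0.
  by move: (hn j) => /negbFE/eqP ->; rewrite mulr0.
have dk : dd k = lam.
  apply/eqP; rewrite -subr_eq0; apply/eqP.
  apply: (mulIf hk); rewrite mul0r mulrBl he subrr //.
have hz : forall j, j != k -> f j 0 = 0.
  move=> j hj; have [//|hf] := eqVneq (f j 0) 0.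
  have dj : dd j = lam.
    apply: (mulIf hf); exact: he.
  have hle : dd j <= 1 - dd k.
    rewrite -(d_sum hsigma) (bigD1 k) //= -/(dd k) addrC addrK.
    rewrite (bigD1 j) //= lerDl sumr_ge0 // => i _; exact: dd_ge0.
  rewrite dj dk in hle.
  have : 0 < (1 - lam - lam) + 2 * (lam - 2^-1).
    by rewrite ltr_wpDl ?subr_ge0 // mulr_gt0 ?ltr0n // subr_gt0.
  by rewrite (_ : 1 - lam - lam + 2 * (lam - 2^-1) = 0) ?ltxx //; field.
have hu : (f k 0)^* * f k 0 = 1.
  rewrite -hsum (bigD1 k) //= big1 ?addr0 // => j hj; by rewrite hz // mulr0.
exists k; split => //.
have br : forall M, braket phi (M *m phi) = (cj U M) k k.
  by move=> M; rewrite /braket mulmxA (quad_cj UtU) (quad_single _ hz hu).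
rewrite /variance !br (cjM UtU) -hhE.
rewrite mxE (bigD1 k) //= expr2.
rewrite addrC addrK; apply: eq_bigr => j _; done.
Qed.
End Main.

Unset Implicit Arguments. Set Strict Implicit.

Theorem mainTheorem18 (C : numClosedFieldType) (n : nat)
  (psi : 'cV[C]_n) (sigma H : 'M[C]_n) (eps : C)
  (hpsi : unit_vec psi) (hsigma : density sigma) (hH : herm H)
  (heps : 0 < eps) (hdist : trnorm (proj psi - sigma) <= eps)
  (phi : 'cV[C]_n) (lam : C) (hphi : unit_vec phi)
  (heig : sigma *m phi = lam *: phi)
  (hmax : forall (mu : C) (v : 'cV[C]_n), v != 0 -> sigma *m v = mu *: v -> mu <= lam) :
  1 - eps <= `|braket psi phi| ^+ 2 /\
  ext_ge (purity_coh H sigma) (variance H phi * (2 / eps - 3)).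
Proof.
have [hlam hb] := claim1 hpsi hsigma hdist hphi heig hmax.
split => //.
rewrite /purity_coh; case: ifP => hsupp //=.
rewrite (purity_eq H hsigma).
have hsf : forall i j, dd sigma i = 0 -> dd sigma j * ww sigma H i j = 0.
  by move=> i j; apply: (supp_fact hsigma hH hsupp).
have hdge0 := dd_ge0 hsigma.
have hwge0 := ww_ge0 sigma hH.
have hwsym := ww_sym sigma H.
have hTT := TT_ge0 hdge0 hwge0 hwsym hsf.
have e0' : eps != 0 by rewrite gt_eqF.
have r3 : 3 * eps \is Num.real by rewrite ger0_real // mulr_ge0 ?ler0n ?ltW.
have r2 : (2 : C) \is Num.real by rewrite ger0_real ?ler0n.
have [e3|e3] := real_ltP r3 r2; last first.
  have hK : 2 / eps - 3 <= 0.
    rewrite -oppr_ge0 (_ : - (2 / eps - 3) = (3 * eps - 2) / eps); last by field.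
    by rewrite divr_ge0 ?subr_ge0 // ltW.
  apply: le_trans hTT.
  by rewrite mulr_ge0_le0 // variance_ge0.
have hl2 : 2^-1 < lam.
  rewrite -subr_gt0 (_ : lam - 2^-1 = (lam - (1 - eps / 2)) + ((2 - 3 * eps) / 6 + 6^-1)); last by field.
  rewrite ltr_wpDl ?subr_ge0 // ltr_wpDl ?invr_gt0 ?ltr0n // divr_ge0 ?ler0n // subr_ge0 ltW //.
have [k [dk ->]] := phi_coords H hsigma hphi heig hl2.
apply: (TT_lb hdge0 hwge0 hwsym hsf).
  by rewrite dk; apply: lt_trans hl2; rewrite invr_gt0 ltr0n.
move=> j hj dj0.
apply: key_ineq => //.
- rewrite -(d_sum hsigma) (bigD1 k) //= addrC addrK.
  rewrite (bigD1 j) //= lerDl sumr_ge0 // => i _; exact: hdge0.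
- by rewrite dk.
Qed.
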